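(* Let $H$ be a graph and $q$ a positive integer. Then $H$ is cross-bipartite swapping in $K_q$ if and only if for all nonempty $A,B\subseteq V(K_q)$ with $A\subseteq B$, \[ \hom(H,K_q[A])\,\hom(H,K_q[B])\le\hom_{\mathrm b}(H\times K_2,K_q[A,B]). \]
   Context: $K_q$ is the loopless complete graph on $q$ vertices; $K_q[A]$ is the induced subgraph on $A$; $\hom$ counts homomorphisms. The tensor product $H\times K_2$ has vertex set $V(H)\times\{1,2\}$ with $(u,i)\sim(v,j)$ iff $uv\in E(H)$ and $i\ne j$. For $A,B\subseteq V(K_q)$, $\hom_{\mathrm b}(H\times K_2,K_q[A,B])$ is the number of homomorphisms $H\times K_2\to K_q$ mapping $V(H)\times\{1\}$ into $A$ and $V(H)\times\{2\}$ into $B$. $H$ is cross-bipartite swapping in $K_q$ if the displayed inequality holds for all $A,B\subseteq V(K_q)$. *)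

(* Defs.v *)
From mathcomp Require Import all_boot.
Set Implicit Arguments. Unset Strict Implicit. Unset Printing Implicit Defensive.

(* A graph H is a symmetric irreflexive relation e on a finite vertex type T.
   K_q is the loopless complete graph on 'I_q; K_q[A] is induced on A. *)

Definition homK (T : finType) (e : rel T) (q : nat) (A : {set 'I_q}) : nat :=
  #|[set f : {ffun T -> 'I_q} |
      [forall x, f x \in A] && [forall x, forall y, e x y ==> (f x != f y)]]|.

(* The tensor product H x K_2 on V(H) x {1,2}; side 1 = false, side 2 = true. *)
Definition tensorK2 (T : finType) (e : rel T) : rel (T * bool) :=
  fun x y => e x.1 y.1 && (x.2 != y.2).

Definition homb (T : finType) (e : rel T) (q : nat) (A B : {set 'I_q}) : nat :=
  #|[set f : {ffun T * bool -> 'I_q} |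
      [forall x, f x \in (if x.2 then B else A)] &&
      [forall x, forall y, tensorK2 e x y ==> (f x != f y)]]|.

Definition cross_bipartite_swapping (T : finType) (e : rel T) (q : nat) : Prop :=
  forall A B : {set 'I_q}, homK e A * homK e B <= homb e A B.

(* Main.v *)
Require Import Defs.
From mathcomp Require Import all_boot.

Lemma card_inj_le (U : finType) (X Y : {set U}) (F : U -> U) :
  {in X &, injective F} -> (forall f, f \in X -> F f \in Y) -> #|X| <= #|Y|.
Proof.
move=> inj FY; rewrite -(card_in_imset inj); apply: subset_leq_card.
by apply/subsetP => _ /imsetP [f fX ->]; exact: FY.
Qed.

Lemma homK_mono (T : finType) (e : rel T) (q : nat) (A' A : {set 'I_q})
  (s : 'I_q -> 'I_q) :
  {in A' &, injective s} -> (forall x, x \in A' -> s x \in A) ->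
  homK e A' <= homK e A.
Proof.
move=> inj sA; apply: (@card_inj_le _ _ _ (fun f : {ffun T -> 'I_q} => [ffun x => s (f x)])).
- move=> f1 f2; rewrite !inE => /andP [/forallP H1 _] /andP [/forallP H2 _] E.
  apply/ffunP => x; apply: inj; [exact: H1 | exact: H2 |].
  by move/ffunP: E => /(_ x); rewrite !ffunE.
- move=> f; rewrite !inE => /andP [/forallP H1 /forallP H2].
  apply/andP; split; apply/forallP => x; rewrite ?ffunE; first exact: sA.
  apply/forallP => y; apply/implyP => exy; rewrite !ffunE.
  have := implyP (forallP (H2 x) y) exy.
  by apply: contra => /eqP E; apply/eqP; apply: inj.
Qed.

Lemma homb_mono (T : finType) (e : rel T) (q : nat) (A' A B : {set 'I_q})
  (s : 'I_q -> 'I_q) :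
  {in A' &, injective s} -> (forall x, x \in A' -> s x \in A) ->
  (forall x, x \in A' -> s x \in B -> s x = x) ->
  homb e A' B <= homb e A B.
Proof.
move=> inj sA sB.
apply: (@card_inj_le _ _ _ (fun f : {ffun T * bool -> 'I_q} => [ffun x => if x.2 then f x else s (f x)])).
- move=> f1 f2; rewrite !inE => /andP [/forallP H1 _] /andP [/forallP H2 _] E.
  apply/ffunP => x; move/ffunP: E => /(_ x); rewrite !ffunE.
  case: x H1 H2 => x [] H1 H2 //= /=.
  by apply: inj; [exact: (H1 (x, false)) | exact: (H2 (x, false))].
- move=> f; rewrite !inE => /andP [/forallP H1 /forallP H2].
  apply/andP; split; apply/forallP => x; rewrite ?ffunE.
    by case: x => x [] /=; [exact: (H1 (x, true)) | apply: sA; exact: (H1 (x, false))].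
  apply/forallP => y; apply/implyP => exy; rewrite !ffunE.
  have := implyP (forallP (H2 x) y) exy.
  move: exy; rewrite /tensorK2; case: x => x [] ; case: y => y [] //= _.
  + have Hy := H1 (y, false); have Hx := H1 (x, true); simpl in Hx, Hy.
    apply: contra => /eqP E; apply/eqP; rewrite E; apply: sB => //.
    by rewrite -E.
  + have Hy := H1 (y, true); have Hx := H1 (x, false); simpl in Hx, Hy.
    apply: contra => /eqP E; apply/eqP; rewrite -E; apply/esym/sB => //.
    by rewrite E.
  + apply: contra => /eqP E; apply/eqP; apply: inj E; [exact: (H1 (x, false)) | exact: (H1 (y, false))].
Qed.

Lemma homb_swap (T : finType) (e : rel T) (e_sym : symmetric e) (q : nat)
  (A B : {set 'I_q}) : homb e B A <= homb e A B.
Proof.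
apply: (@card_inj_le _ _ _ (fun f : {ffun T * bool -> 'I_q} => [ffun x => f (x.1, ~~ x.2)])).
- move=> f1 f2 _ _ E; apply/ffunP => [[x b]].
  move/ffunP: E => /(_ (x, ~~ b)); rewrite !ffunE /= negbK.
  by [].
- move=> f; rewrite !inE => /andP [/forallP H1 /forallP H2].
  apply/andP; split; apply/forallP => [[x b]]; rewrite ?ffunE /=.
    by have := H1 (x, ~~ b); case: b.
  apply/forallP => [[y c]]; apply/implyP; rewrite /tensorK2 /= => /andP [exy bc].
  rewrite !ffunE /=.
  have := forallP (H2 (x, ~~ b)) (y, ~~ c); rewrite /tensorK2 /= exy.
  by case: b c bc => [] [].
Qed.

Lemma exists_sub (T : finType) (e : rel T) (q : nat) (A B : {set 'I_q}) :
  #|A| <= #|B| -> exists A' : {set 'I_q}, [/\ A' \subset B,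
    homK e A <= homK e A', homb e A' B <= homb e A B & (A != set0 -> A' != set0)].
Proof.
move=> AB.
set D := A :\: B; set E := B :\: A.
have DE : #|D| <= #|E|.
  by move: AB; rewrite -(cardsID B A) -(cardsID A B) setIC leq_add2l.
pose tau x := nth x (enum E) (index x (enum D)).
pose sig y := nth y (enum D) (index y (enum E)).
have tauE x : x \in D -> tau x \in E.
  move=> xD; rewrite -mem_enum /tau; apply: mem_nth.
  by rewrite -cardE (leq_trans _ DE) // cardE index_mem mem_enum.
have sigtau x : x \in D -> sig (tau x) = x.
  move=> xD; rewrite /sig /tau index_uniq ?enum_uniq ?nth_index ?mem_enum //.
  by rewrite -cardE (leq_trans _ DE) // cardE index_mem mem_enum.
pose A' := (A :&: B) :|: (tau @: D).
exists A'.
have EnA y : y \in E -> (y \in A) = false.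
  by rewrite inE => /andP [/negbTE].
have DnB y : y \in D -> (y \in B) = false.
  by rewrite inE => /andP [/negbTE].
have EB y : y \in E -> y \in B by rewrite inE => /andP [].
have DA y : y \in D -> y \in A by rewrite inE => /andP [].
pose sg y := if y \in A then y else sig y.
have classA' y : y \in A' ->
  (y \in A /\ y \in B /\ sg y = y) \/ (exists2 x, x \in D & y = tau x /\ sg y = x).
  rewrite inE => /orP [|/imsetP [x xD ->]].
    by rewrite inE => /andP [yA yB]; left; rewrite /sg yA.
  by right; exists x => //; split => //; rewrite /sg EnA ?tauE ?sigtau.
split.
- apply/subsetP => y; rewrite inE => /orP [|/imsetP [x xD ->]].
    by rewrite inE => /andP [].
  by apply/EB/tauE.
- pose rho x := if x \in B then x else tau x.
  apply: (@homK_mono _ _ _ _ _ rho).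
  + move=> x1 x2 x1A x2A; rewrite /rho.
    case: ifP => x1B; case: ifP => x2B.
    * by [].
    * have x2D : x2 \in D by rewrite inE x2B.
      by move=> E1; move: (EnA _ (tauE _ x2D)); rewrite -E1 x1A.
    * have x1D : x1 \in D by rewrite inE x1B.
      by move=> E1; move: (EnA _ (tauE _ x1D)); rewrite E1 x2A.
    * have x1D : x1 \in D by rewrite inE x1B.
      have x2D : x2 \in D by rewrite inE x2B.
      by move=> E1; rewrite -(sigtau _ x1D) -(sigtau _ x2D) E1.
  + move=> x xA; rewrite /rho /A'; case: ifP => xB.
      by rewrite inE inE xA xB.
    by rewrite inE; apply/orP; right; apply: imset_f; rewrite inE xB.
- apply: (@homb_mono _ _ _ _ _ _ sg).
  + move=> y1 y2 /classA' H1 /classA' H2.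
    case: H1 => [[y1A [y1B ->]] | [x1 x1D [-> ->]]];
    case: H2 => [[y2A [y2B ->]] | [x2 x2D [-> ->]]] //.
    * by move=> E1; move: (DnB _ x2D); rewrite -E1 y1B.
    * by move=> E1; move: (DnB _ x1D); rewrite E1 y2B.
    * by move->.
  + move=> y /classA' [[yA [_ ->]] // | [x xD [_ ->]]]; exact: DA.
  + move=> y /classA' [[_ [_ ->]] // | [x xD [_ ->]]].
    by rewrite DnB.
- case/set0Pn => a aA; apply/set0Pn.
  case aB : (a \in B).
    by exists a; rewrite !inE aA aB.
  exists (tau a); rewrite inE; apply/orP; right; apply: imset_f.
  by rewrite inE aB.
Qed.

Theorem lemma6p1 (T : finType) (e : rel T) (e_sym : symmetric e)
    (e_irr : irreflexive e) (q : nat) (q_pos : 0 < q) :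
  cross_bipartite_swapping e q <->
  (forall A B : {set 'I_q}, A != set0 -> B != set0 -> A \subset B ->
     homK e A * homK e B <= homb e A B).
Proof.
split; first by move=> H A B _ _ _; apply: H.
move=> H A B.
case: (pickP (@predT T)) => [t _ | T0].
- have K0 : homK e (set0 : {set 'I_q}) = 0.
    apply/eqP; rewrite cards_eq0; apply/eqP/setP => f; rewrite !inE.
    by apply/negP => /andP [/forallP /(_ t)]; rewrite inE.
  have [->|A0] := eqVneq A set0; first by rewrite K0.
  have [->|B0] := eqVneq B set0; first by rewrite K0 muln0.
  case: (leqP #|A| #|B|) => AB.
  + have [A' [A'B hA hb nA]] := @exists_sub T e q A B AB.
    apply: leq_trans _ hb; apply: leq_trans _ (H _ _ (nA A0) B0 A'B).
    by rewrite leq_mul2r hA orbT.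
  + have [B' [B'A hB hb nB]] := @exists_sub T e q B A (ltnW AB).
    apply: leq_trans _ (@homb_swap T e e_sym q A B).
    apply: leq_trans _ hb; apply: leq_trans _ (H _ _ (nB B0) A0 B'A).
    by rewrite mulnC leq_mul2r hB orbT.
- have cT : #|T| = 0 by apply: eq_card0.
  have le1 (C : {set 'I_q}) : homK e C <= 1.
    apply: leq_trans (max_card _) _.
    by rewrite card_ffun cT.
  apply: leq_trans (leq_mul (le1 A) (le1 B)) _.
  rewrite card_gt0; apply/set0Pn; exists [ffun => Ordinal q_pos].
  rewrite inE; apply/andP; split; apply/forallP => [[x b]]; by have := T0 x.
Qed.
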